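(* Let $n$ be even and $p=n/2$. (1) If $\mathcal{A}\subseteq\mathcal{K}^n_{p-1}$ is a set of $(p-1)$-faces with $|\mathcal{A}|\le n/32$, then $|\partial^+\mathcal{A}|\ge|\mathcal{A}|\cdot(n/2+1)\cdot(15/16)$. (2) If $\mathcal{A}\subseteq\mathcal{K}^n_{p+1}$ is a set of $(p+1)$-faces with $|\mathcal{A}|\le n/8$, then $|\partial^-\mathcal{A}|\ge 2\cdot|\mathcal{A}|\cdot(n/2+1)\cdot(15/16)$.
   Context: An $r$-face of the $n$-dimensional binary cube is a word in $\{0,1,*\}^n$ with exactly $r$ entries equal to $*$; $\mathcal{K}^n_r$ is the set of all $r$-faces. The upper shadow $\partial^+$ of an $r$-face is the set of $(r+1)$-faces obtained by replacing one non-$*$ entry by $*$; the lower shadow $\partial^-$ of an $r$-face is the set of $(r-1)$-faces obtained by replacing one $*$ entry by $0$ or by $1$. For a set $\mathcal{A}$ of faces, $\partial^\pm\mathcal{A}$ is the union of the shadows of its elements. *)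

(* Defs.v *)
From mathcomp Require Import all_boot all_order all_algebra.
Set Implicit Arguments. Unset Strict Implicit. Unset Printing Implicit Defensive.

(* A word in {0,1,*}^n: None = *, Some false = 0, Some true = 1. *)
Definition word (n : nat) := {ffun 'I_n -> option bool}.

Definition nstars n (w : word n) : nat := #|[set i | w i == None]|.

Definition faces n (r : nat) : {set word n} := [set w | nstars w == r].

Definition setw n (w : word n) (i : 'I_n) (c : option bool) : word n :=
  [ffun j => if j == i then c else w j].

Definition ushadow1 n (w : word n) : {set word n} :=
  [set setw w i None | i in [set i | w i != None]].

Definition lshadow1 n (w : word n) : {set word n} :=
  [set setw w i (Some b) | i in [set i | w i == None], b in [set: bool]].

Definition ushadow n (A : {set word n}) : {set word n} :=
  \bigcup_(w in A) ushadow1 w.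
Definition lshadow n (A : {set word n}) : {set word n} :=
  \bigcup_(w in A) lshadow1 w.

(* Main.v *)
Require Import Defs.
From mathcomp Require Import all_boot all_order all_algebra.
From mathcomp Require Import zify.
From mathcomp Require Import ring lra.
Import GRing.Theory Num.Theory.

Lemma card_bigcup_le (T U : finType) (A : {set T}) (S : T -> {set U}) :
  #|\bigcup_(x in A) S x| <= \sum_(x in A) #|S x|.
Proof.
apply: (big_ind2 (fun (s : {set U}) m => #|s| <= m)) => //.
  by rewrite cards0.
move=> s1 m1 s2 m2 h1 h2; apply: leq_trans (leq_card_setU _ _) _.
exact: leq_add.
Qed.

Lemma union_bound (T U : finType) (S : T -> {set U}) (k : nat) :
  forall A : {set T}, #|A| = k ->
  {in A &, forall x y, x != y -> #|S x :&: S y| <= 1} ->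
  \sum_(x in A) #|S x| <= #|\bigcup_(x in A) S x| + 'C(#|A|, 2).
Proof.
elim: k => [|k IH] A hA hS.
  move/eqP: hA; rewrite cards_eq0 => /eqP ->.
  by rewrite big_set0 cards0.
have [x xA] : exists x, x \in A.
  by apply/set0Pn; rewrite -card_gt0 hA.
have hA' : #|A :\ x| = k by move: hA; rewrite (cardsD1 x) xA add1n => -[].
have hS' : {in A :\ x &, forall x y, x != y -> #|S x :&: S y| <= 1}.
  move=> y z; rewrite !inE => /andP[_ yA] /andP[_ zA]; exact: hS.
have IH' := IH _ hA' hS'.
rewrite (big_setD1 x xA) [in X in _ <= X](big_setD1 x xA) /=.
set B := \bigcup_(y in A :\ x) S y.
have hI : #|S x :&: B| <= k.
  have -> : S x :&: B = \bigcup_(y in A :\ x) (S x :&: S y).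
    apply/setP => u; rewrite inE; apply/andP/bigcupP.
      by case=> ux /bigcupP[y yA uy]; exists y => //; rewrite inE ux uy.
    by case=> y yA; rewrite inE => /andP[ux uy]; split => //; apply/bigcupP; exists y.
  apply: leq_trans (@card_bigcup_le _ _ (A :\ x) (fun y => S x :&: S y)) _.
  rewrite -hA' -sum1_card.
  apply: leq_sum => y; rewrite !inE => /andP[yx yA].
  by apply: hS; rewrite // eq_sym.
have hU := cardsUI (S x) B.
rewrite hA binS bin1.
rewrite hA' in IH'.
rewrite -/B in IH'.
lia.
Qed.

Lemma setwE n (w : word n) i c t : setw w i c t = if t == i then c else w t.
Proof. by rewrite /setw ffunE. Qed.

Lemma card_ushadow1 n (w : word n) : #|ushadow1 w| = n - nstars w.
Proof.
rewrite /ushadow1 card_in_imset.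
  have := cardsC [set i | w i == None]; rewrite card_ord /nstars.
  have -> : ~: [set i | w i == None] = [set i | w i != None].
    by apply/setP => i; rewrite !inE.
  lia.
move=> i j; rewrite !inE => hi hj /ffunP /(_ i); rewrite !setwE eqxx.
by case: eqVneq => // _ h; rewrite -h eqxx in hi.
Qed.

Lemma card_lshadow1 n (w : word n) : #|lshadow1 w| = 2 * nstars w.
Proof.
have -> : lshadow1 w = (fun q : 'I_n * bool => setw w q.1 (Some q.2)) @:
    setX [set i | w i == None] [set: bool].
  apply/setP => u; apply/imset2P/imsetP.
    by case=> i b hi hb ->; exists (i, b) => //; rewrite inE hi hb.
  by case=> [[i b]]; rewrite inE /= => /andP[hi hb] ->; exists i b.
rewrite card_in_imset.
  by rewrite cardsX cardsT card_bool mulnC.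
move=> [i b] [j c]; rewrite !inE /= => /andP[hi _] /andP[hj _] /ffunP h.
have := h i; rewrite !setwE eqxx.
case: eqVneq => [->|ij]; first by case=> ->.
by move=> e; rewrite -e in hi.
Qed.

Lemma ushadow_common n (w w' : word n) : w != w' ->
  #|ushadow1 w :&: ushadow1 w'| <= 1.
Proof.
move=> ww'.
apply/card_le1_eqP.
suff H : forall u, u \in ushadow1 w :&: ushadow1 w' ->
   u = [ffun t => if w t == w' t then w t else None].
  by move=> u v /H -> /H ->.
move=> u; rewrite inE => /andP[/imsetP[i hi ->] /imsetP[j hj e]].
move: hi hj; rewrite !inE => hi hj.
apply/ffunP => t; rewrite !ffunE.
case: (eqVneq t i) => [ti|ti].
  subst t; case: (eqVneq (w i)) => // wi.
  exfalso; move: (e) => /ffunP /(_ i); rewrite !setwE eqxx.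
  case: (eqVneq i j) => [ij|ij] h.
    subst j; case/negP: ww'; apply/eqP/ffunP => s.
    case: (eqVneq s i) => [->//|si].
    by move: e => /ffunP /(_ s); rewrite !setwE (negPf si).
  by rewrite wi -h in hi.
case: (eqVneq (w t)) => // wt.
move: e => /ffunP /(_ t); rewrite !setwE (negPf ti).
by case: eqVneq => // _ h; rewrite h eqxx in wt.
Qed.

Lemma lshadow_common n (w w' : word n) : w != w' ->
  #|lshadow1 w :&: lshadow1 w'| <= 1.
Proof.
move=> ww'.
apply/card_le1_eqP.
suff H : forall u, u \in lshadow1 w :&: lshadow1 w' ->
   u = [ffun t => if w t is None then w' t else w t].
  by move=> u v /H -> /H ->.
move=> u; rewrite inE => /andP[/imset2P[i b hi _ ->] /imset2P[j c hj _ e]].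
move: hi hj; rewrite !inE => /eqP hi /eqP hj.
apply/ffunP => t; rewrite !ffunE.
case: (eqVneq t i) => [ti|ti].
  subst t; rewrite hi.
  move: (e) => /ffunP /(_ i); rewrite !setwE eqxx.
  case: (eqVneq i j) => [ij|ij] h //.
  subst j; case/negP: ww'; apply/eqP/ffunP => s.
  case: (eqVneq s i) => [->|si]; first by rewrite hi hj.
  by move: e => /ffunP /(_ s); rewrite !setwE (negPf si).
move: e => /ffunP /(_ t); rewrite !setwE (negPf ti).
case: (eqVneq t j) => [tj|tj] h.
  by subst t; rewrite hj h.
by rewrite -h; case: (w t).
Qed.

Local Open Scope ring_scope.

Lemma castQ (m : nat) : m%:Q = m%:R.
Proof. by []. Qed.

Theorem mainTheorem3 (n : nat) (Hn : ~~ odd n) :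
  let p := n./2 in
  (forall A : {set word n}, A \subset faces n p.-1 ->
     (#|A|%:Q <= n%:Q / 32) ->
     #|ushadow A|%:Q >= #|A|%:Q * (n%:Q / 2 + 1) * (15 / 16)) /\
  (forall A : {set word n}, A \subset faces n p.+1 ->
     (#|A|%:Q <= n%:Q / 8) ->
     #|lshadow A|%:Q >= 2 * #|A|%:Q * (n%:Q / 2 + 1) * (15 / 16)).
Proof.
move=> p.
have hn : n = (p * 2)%N.
  by have := odd_double_half n; rewrite (negPf Hn) add0n -muln2 => ->.
split=> A hA hk.
- have hk' : (32 * #|A| <= n)%N.
    by rewrite -(ler_nat rat) natrM; move: hk; rewrite [#|A|%:Q]castQ [n%:Q]castQ; lra.
  have hS : forall w, w \in A -> #|ushadow1 w| = p.+1.
    move=> w wA; have := subsetP hA w wA; rewrite inE => /eqP hw.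
    have hpos : (0 < #|A|)%N by apply/card_gt0P; exists w.
    rewrite card_ushadow1 hw; lia.
  have := @union_bound _ _ (@ushadow1 n) #|A| A erefl
    (fun x y _ _ xy => @ushadow_common _ _ _ xy).
  rewrite (eq_bigr (fun _ => p.+1) hS) sum_nat_const -/(ushadow A).
  move=> hU.
  have hnat : (15 * #|A| * p.+1 <= 16 * #|ushadow A|)%N.
    have h2 := mul_bin_diag #|A| 1; rewrite bin1 in h2.
    have h3 : (#|A| * (8 * #|A|.-1) <= #|A| * p.+1)%N.
      by rewrite leq_mul2l; apply/orP; right; lia.
    move: hU h2 h3; rewrite -mulnA.
    move: (#|A| * p.+1)%N ('C(#|A|, 2)) => Y C.
    rewrite mulnCA; move: (#|A| * #|A|.-1)%N => X.
    lia.
  have hq : (15 * (#|A| * (p + 1)) <= 16 * #|ushadow A|)%N by rewrite addn1 mulnA.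
  move: hq; rewrite -(ler_nat rat) !natrM natrD => hq.
  have hnq : n%:R = (p%:R * 2 : rat) by rewrite hn natrM.
  rewrite [#|A|%:Q]castQ [#|ushadow A|%:Q]castQ [n%:Q]castQ hnq; lra.
- have hk' : (8 * #|A| <= n)%N.
    by rewrite -(ler_nat rat) natrM; move: hk; rewrite [#|A|%:Q]castQ [n%:Q]castQ; lra.
  have hS : forall w, w \in A -> #|lshadow1 w| = (2 * p.+1)%N.
    move=> w /(subsetP hA); rewrite inE => /eqP hw.
    by rewrite card_lshadow1 hw.
  have := @union_bound _ _ (@lshadow1 n) #|A| A erefl
    (fun x y _ _ xy => @lshadow_common _ _ _ xy).
  rewrite (eq_bigr (fun _ => (2 * p.+1)%N) hS) sum_nat_const -/(lshadow A).
  move=> hU.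
  have hnat : (30 * #|A| * p.+1 <= 16 * #|lshadow A|)%N.
    have h2 := mul_bin_diag #|A| 1; rewrite bin1 in h2.
    have h3 : (#|A| * (4 * #|A|.-1) <= #|A| * p.+1)%N.
      by rewrite leq_mul2l; apply/orP; right; lia.
    move: hU h2 h3; rewrite mulnCA -mulnA.
    move: (#|A| * p.+1)%N ('C(#|A|, 2)) => Y C.
    rewrite mulnCA; move: (#|A| * #|A|.-1)%N => X.
    lia.
  have hq : (30 * (#|A| * (p + 1)) <= 16 * #|lshadow A|)%N by rewrite addn1 mulnA.
  move: hq; rewrite -(ler_nat rat) !natrM natrD => hq.
  have hnq : n%:R = (p%:R * 2 : rat) by rewrite hn natrM.
  rewrite [#|A|%:Q]castQ [#|lshadow A|%:Q]castQ [n%:Q]castQ hnq; lra.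
Qed.
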